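(* Let $\theta \geq 2$ be an integer, $F = 4\theta - 1$, and $p_j = \binom{F}{j} 2^{-F}$ for $j = 0,\ldots,F$. Then $$\sum_{j \leq \theta} (-j)\, p_j + \sum_{\theta < j \leq F} \big(j + 2(1 - j/F - \theta)\big) p_j > 0.$$
   Context: This quantity is the expected value $E\phi(e)$ of the weight $\phi(e) = -\zeta_0(e)$ if $\zeta_0(e) \leq \theta$ and $\phi(e) = \zeta_0(e) + 2(X - \theta)$ otherwise, where $\zeta_0(e) \sim \mathrm{Binomial}(F,1/2)$ and, given $\zeta_0(e)$, $X$ is Bernoulli$(1 - \zeta_0(e)/F)$. *)

(* Defs.v *)
From mathcomp Require Import all_boot all_order all_algebra.
Set Implicit Arguments. Unset Strict Implicit. Unset Printing Implicit Defensive.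
Import Order.TTheory GRing.Theory Num.Theory.
Local Open Scope ring_scope.

Definition pj (F j : nat) : rat := ('C(F, j))%:R / 2%:R ^+ F.

(* Main.v *)
Require Import Defs.
From mathcomp Require Import all_boot all_order all_algebra.
From mathcomp Require Import zify ring lra.
Import Order.TTheory GRing.Theory Num.Theory.
Local Open Scope ring_scope.

Definition coef (t F k : nat) : rat :=
  if (k <= t)%N then - (k%:R) else k%:R + 2%:R * (1 - k%:R / F%:R - t%:R).
Definition hh t F k := coef t F k * pj F k.
Definition qq t F k := hh t F k + hh t F (F - k).

Lemma pj_sym F j : (j <= F)%N -> pj F (F - j) = pj F j.
Proof. by move=> h; rewrite /pj bin_sub. Qed.

Lemma pj_ge0 F j : 0 <= pj F j.
Proof. by rewrite /pj divr_ge0 // exprn_ge0. Qed.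

Lemma qq_sym t F j : (j <= F)%N -> qq t F (F - j) = qq t F j.
Proof. by move=> h; rewrite /qq subKn // addrC. Qed.

Lemma coef_low t j : (2 <= t)%N -> (j <= t)%N ->
  coef t (4 * t - 1) j + coef t (4 * t - 1) (4 * t - 1 - j) =
  2%:R * t%:R - 1 - 2%:R * j%:R + 2%:R * (j%:R / (4 * t - 1)%:R).
Proof.
move=> h2 hj; rewrite /coef hj.
have -> : (4 * t - 1 - j <= t)%N = false by lia.
have hF : (4 * t - 1)%:R = 4%:R * t%:R - 1 :> rat.
  by rewrite natrB ?natrM //; lia.
have hFj : (4 * t - 1 - j)%:R = 4%:R * t%:R - 1 - j%:R :> rat.
  by rewrite natrB ?hF //; lia.
have hnz : (4 * t - 1)%:R != 0 :> rat by rewrite pnatr_eq0; lia.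
rewrite hFj; rewrite hF in hnz *; field.
by rewrite hnz.
Qed.

Lemma coef_mid t j : (2 <= t)%N -> (t < j)%N -> (t < 4 * t - 1 - j)%N ->
  coef t (4 * t - 1) j + coef t (4 * t - 1) (4 * t - 1 - j) = 1.
Proof.
move=> h2 hj hj'; rewrite /coef.
have -> : (j <= t)%N = false by lia.
have -> : (4 * t - 1 - j <= t)%N = false by lia.
have hF : (4 * t - 1)%:R = 4%:R * t%:R - 1 :> rat.
  by rewrite natrB ?natrM //; lia.
have hFj : (4 * t - 1 - j)%:R = 4%:R * t%:R - 1 - j%:R :> rat.
  by rewrite natrB ?hF //; lia.
have hnz : (4 * t - 1)%:R != 0 :> rat by rewrite pnatr_eq0; lia.
rewrite hFj; rewrite hF in hnz *; field.
by rewrite hnz.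
Qed.

Lemma qq_eq t j : (j <= 4 * t - 1)%N ->
  qq t (4 * t - 1) j = pj (4 * t - 1) j *
     (coef t (4 * t - 1) j + coef t (4 * t - 1) (4 * t - 1 - j)).
Proof. by move=> h; rewrite /qq /hh pj_sym // mulrDr ![pj _ _ * _]mulrC. Qed.

Lemma qq_ge0 t j : (2 <= t)%N -> (j <= 4 * t - 1)%N ->
  j != t -> j != (4 * t - 1 - t)%N -> 0 <= qq t (4 * t - 1) j.
Proof.
move=> h2 hj n1 n2; rewrite qq_eq //; apply: mulr_ge0; first exact: pj_ge0.
have [hl|hl] := leqP j t.
  rewrite coef_low //.
  have hy : 0 <= j%:R / (4 * t - 1)%:R :> rat by rewrite divr_ge0.
  have : ((j.+1)%:R : rat) <= t%:R by rewrite ler_nat; lia.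
  rewrite -addn1 natrD => ?; lra.
have [hl'|hl'] := leqP (4 * t - 1 - j) t.
  have e : coef t (4 * t - 1) j + coef t (4 * t - 1) (4 * t - 1 - j) =
     coef t (4 * t - 1) (4 * t - 1 - j) + coef t (4 * t - 1) (4 * t - 1 - (4 * t - 1 - j)).
    by rewrite subKn // addrC.
  rewrite e.
  rewrite coef_low //.
  set k := (4 * t - 1 - j)%N.
  have hy : 0 <= k%:R / (4 * t - 1)%:R :> rat by rewrite divr_ge0.
  have : ((k.+1)%:R : rat) <= t%:R by rewrite ler_nat /k; lia.
  rewrite -addn1 natrD => ?; lra.
by rewrite coef_mid.
Qed.

Lemma key t : (2 <= t)%N -> 0 < qq t (4 * t - 1) t + qq t (4 * t - 1) t.+1.
Proof.
move=> h2; rewrite !qq_eq; try lia.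
rewrite coef_low // coef_mid //; try lia.
have hp : pj (4 * t - 1) t <= pj (4 * t - 1) t.+1.
  rewrite /pj ler_pM2r ?invr_gt0 ?exprn_gt0 // ler_nat.
  have e := mul_bin_left (4 * t - 1) t.
  have : (0 < 'C(4 * t - 1, t))%N by rewrite bin_gt0; lia.
  nia.
have hpos : 0 < pj (4 * t - 1) t.
  by rewrite /pj divr_gt0 ?exprn_gt0 // ltr0n bin_gt0; lia.
have hy : 0 < t%:R / (4 * t - 1)%:R :> rat.
  by rewrite divr_gt0 // ltr0n; lia.
rewrite mulr1.
have -> : 2%:R * t%:R - 1 - 2%:R * t%:R + 2%:R * (t%:R / (4 * t - 1)%:R)
   = -1 + 2%:R * (t%:R / (4 * t - 1)%:R) :> rat by ring.
rewrite mulrDr mulrN1.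
have : 0 < pj (4 * t - 1) t * (2%:R * (t%:R / (4 * t - 1)%:R)).
  by rewrite mulr_gt0 // mulr_gt0.
lra.
Qed.

Theorem lemma6 (theta : nat) (htheta : (2 <= theta)%N) :
  let F := (4 * theta - 1)%N in
  0 < \sum_(0 <= j < theta.+1) (- (j%:R : rat)) * pj F j
      + \sum_(theta.+1 <= j < F.+1)
          ((j%:R : rat) + 2%:R * (1 - j%:R / F%:R - theta%:R)) * pj F j.
Proof.
cbv zeta; set F := (4 * theta - 1)%N.
have -> : \sum_(0 <= j < theta.+1) (- (j%:R : rat)) * pj F j
      + \sum_(theta.+1 <= j < F.+1)
          ((j%:R : rat) + 2%:R * (1 - j%:R / F%:R - theta%:R)) * pj F j
   = \sum_(0 <= j < F.+1) hh theta F j.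
  rewrite [RHS](big_cat_nat (n := theta.+1)) /=; try (rewrite /F; lia).
  congr (_ + _); apply: eq_big_nat => i /andP[h1 h2]; rewrite /hh /coef.
    by rewrite ifT.
  by rewrite ifF //; lia.
have e2 : 2%:R * \sum_(0 <= j < F.+1) hh theta F j = \sum_(0 <= j < F.+1) qq theta F j.
  rewrite /qq big_split /= mulr2n mulrDl mul1r; congr (_ + _).
  rewrite (big_nat_rev _ _ 0 F.+1) /=.
  by apply: eq_big_nat => i _; rewrite add0n subSS.
suff : 0 < \sum_(0 <= j < F.+1) qq theta F j by rewrite -e2; lra.
have hF : F.+1 = (4 * theta)%N by rewrite /F; lia.
have nn : forall m n, (n <= F.+1)%N -> (forall j, (m <= j < n)%N -> j != theta /\ j != (F - theta)%N) ->
   0 <= \sum_(m <= j < n) qq theta F j.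
  move=> m n hn hc; rewrite big_seq; apply: sumr_ge0 => j; rewrite mem_index_iota => hj.
  have [c1 c2] := hc j hj.
  by apply: qq_ge0 => //; rewrite /F in hn *; lia.
rewrite (big_cat_nat (n := theta)) /=; last (rewrite /F; lia); last done.
rewrite (big_ltn (m := theta)); last (rewrite /F; lia).
rewrite (big_ltn (m := theta.+1)); last (rewrite /F; lia).
rewrite (big_cat_nat (m := theta.+2) (n := (F - theta).-1)) /=; last (rewrite /F; lia); last (rewrite /F; lia).
rewrite (big_ltn (m := (F - theta).-1)); last (rewrite /F; lia).
rewrite (big_ltn (m := (F - theta).-1.+1)); last (rewrite /F; lia).
have s1 : qq theta F (F - theta).-1 = qq theta F theta.+1.
  rewrite -(qq_sym theta F theta.+1); last (rewrite /F; lia).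
  by congr qq; rewrite /F; lia.
have s2 : qq theta F (F - theta).-1.+1 = qq theta F theta.
  rewrite -(qq_sym theta F theta); last (rewrite /F; lia).
  by congr qq; rewrite /F; lia.
rewrite s1 s2.
have k := key theta htheta.
have a1 := nn 0%N theta ltac:(rewrite /F; lia) ltac:(move=> j hj; split; apply/eqP; rewrite /F in hj *; lia).
have a2 := nn theta.+2 (F - theta).-1 ltac:(rewrite /F; lia) ltac:(move=> j hj; split; apply/eqP; rewrite /F in hj *; lia).
have a3 := nn (F - theta).-1.+2 F.+1 ltac:(rewrite /F; lia) ltac:(move=> j hj; split; apply/eqP; rewrite /F in hj *; lia).
rewrite /F in k a1 a2 a3 *.
lra.
Qed.
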